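(* Let $X$ be a real Banach space with a normalized Schauder basis $\mathcal B=(e_n)_{n=1}^\infty$ with biorthogonal functionals $(e_n^* )$, and let $\mathcal E=(\varepsilon_n)_{n=1}^\infty$ be a sequence of nonnegative numbers. Each of the following conditions is sufficient for the brick $K_{\mathcal B,\mathcal E}$ to be solid: (1) $\mathcal B$ is an unconditional basis; (2) $\sum_{n=1}^\infty\varepsilon_n<\infty$.
   Context: The brick is $K_{\mathcal B,\mathcal E}=\{x\in X:\ |e_n^*(x)|\le\varepsilon_n \text{ for all } n\}$. The brick is called solid if for each $x\in K_{\mathcal B,\mathcal E}$ and all scalars $a_1,a_2,\dots$ with $|a_n|\le|e_n^*(x)|$ for all $n$, the series $\sum_{n=1}^\infty a_ne_n$ converges. A basis is unconditional if $\sum_n e_n^*(x)e_n$ converges unconditionally (under every permutation) for every $x\in X$; normalized means $\|e_n\|=1$. *)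

(* Defs.v *)
(* Indices start at 0 (e_0, e_1, ...) instead of 1. *)
From HB Require Import structures.
From mathcomp Require Import all_boot all_order all_algebra.
From mathcomp Require Import all_classical all_reals all_analysis.
Set Implicit Arguments. Unset Strict Implicit. Unset Printing Implicit Defensive.
Import Order.TTheory GRing.Theory Num.Theory.
Import numFieldNormedType.Exports.
Local Open Scope classical_set_scope.
Local Open Scope ring_scope.

Section Defs.
Variables (R : realType) (X : normedModType R).

Definition schauder_basis (e : nat -> X) : Prop :=
  forall x : X, exists! a : nat -> R,
    series (fun n => a n *: e n) @ \oo --> x.

Definition normalized (e : nat -> X) : Prop := forall n, `|e n| = 1.

Definition biorthogonal_functionals (e : nat -> X) (estar : nat -> X -> R) : Prop :=
  (forall n, linear_for *%R (estar n) /\ continuous (estar n)) /\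
  (forall n m, estar n (e m) = if n == m then 1 else 0) /\
  (forall x : X, series (fun n => estar n x *: e n) @ \oo --> x).

Definition unconditional_basis (e : nat -> X) (estar : nat -> X -> R) : Prop :=
  forall x : X, forall s : nat -> nat, bijective s ->
    cvg (series (fun n => estar (s n) x *: e (s n)) @ \oo).

Definition brick (estar : nat -> X -> R) (eps : nat -> R) : set X :=
  [set x | forall n, `|estar n x| <= eps n].

Definition solid_brick (e : nat -> X) (estar : nat -> X -> R) (eps : nat -> R) : Prop :=
  forall x, brick estar eps x ->
  forall a : nat -> R, (forall n, `|a n| <= `|estar n x|) ->
    cvg (series (fun n => a n *: e n) @ \oo).
End Defs.

(* Main.v *)
Require Import Defs.
From HB Require Import structures.
From mathcomp Require Import all_boot all_order all_algebra.
From mathcomp Require Import all_classical all_reals all_analysis.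
From mathcomp Require Import lra.
Import Order.TTheory GRing.Theory Num.Theory.
Import numFieldNormedType.Exports.
Local Open Scope classical_set_scope.
Local Open Scope ring_scope.

Section Perm.
Variables (c : nat -> nat) (Q : nat -> pred nat).
Hypotheses (c0 : c 0 = 0%N) (cS : forall j, (c j < c j.+1)%N).

Definition blk j := index_iota (c j) (c j.+1).
Definition Lb j := seq.filter (Q j) (blk j) ++ seq.filter (predC (Q j)) (blk j).
Fixpoint Pre J := if J is J'.+1 then Pre J' ++ Lb J' else [::].

Lemma Pre_perm J : perm_eq (Pre J) (iota 0 (c J)).
Proof.
elim: J => [|J IH] /=; first by rewrite c0.
have -> : iota 0 (c J.+1) = iota 0 (c J) ++ blk J.
  rewrite /blk /index_iota -{1}(subnKC (ltnW (cS J))) iotaD add0n.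
  by [].
by apply: perm_cat => //; rewrite /Lb perm_filterC.
Qed.

Lemma size_Pre J : size (Pre J) = c J.
Proof. by rewrite (perm_size (Pre_perm J)) size_iota. Qed.

Lemma uniq_Pre J : uniq (Pre J).
Proof. by rewrite (perm_uniq (Pre_perm J)) iota_uniq. Qed.

Lemma mem_Pre J q : (q \in Pre J) = (q < c J)%N.
Proof. by rewrite (perm_mem (Pre_perm J)) mem_iota add0n. Qed.

Lemma Pre_prefix j J : (j <= J)%N -> exists r, Pre J = Pre j ++ r.
Proof.
move=> /subnKC <-; elim: (J - j)%N => [|k [r IH]]; first by exists [::]; rewrite addn0 cats0.
by rewrite addnS /= IH; exists (r ++ Lb (j + k)); rewrite catA.
Qed.

Lemma nth_Pre j J p : (j <= J)%N -> (p < c j)%N -> nth 0%N (Pre J) p = nth 0%N (Pre j) p.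
Proof.
by move=> /Pre_prefix [r ->] pc; rewrite nth_cat size_Pre pc.
Qed.

Lemma c_ge j : (j <= c j)%N.
Proof. elim: j => [|j IH] //; exact: leq_ltn_trans IH (cS j). Qed.

Lemma c_mono j J : (j <= J)%N -> (c j <= c J)%N.
Proof.
move=> /subnKC <-; elim: (J - j)%N => [|k IH]; first by rewrite addn0.
by rewrite addnS (leq_trans IH) // ltnW.
Qed.

Definition sp p := nth 0%N (Pre p.+1) p.
Definition sp' q := index q (Pre q.+1).

Lemma spE J p : (p < c J)%N -> sp p = nth 0%N (Pre J) p.
Proof.
move=> pc; rewrite /sp.
have pc1 : (p < c p.+1)%N by apply: leq_trans (c_ge _).
by rewrite -(@nth_Pre p.+1 (maxn p.+1 J) p (leq_maxl _ _)) // -(@nth_Pre J (maxn p.+1 J) p (leq_maxr _ _)).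
Qed.

Lemma sp_bij : bijective sp.
Proof.
exists sp' => [p|q].
  set J := maxn p.+1 (sp p).+1.
  have pc : (p < c J)%N.
    exact: leq_trans (c_ge p.+1) (@c_mono _ _ (leq_maxl p.+1 (sp p).+1)).
  have e1 : sp p = nth 0%N (Pre J) p by apply: spE.
  have [r Er] := @Pre_prefix _ _ (leq_maxr p.+1 (sp p).+1).
  have mem1 : sp p \in Pre (sp p).+1 by rewrite mem_Pre; apply: leq_trans (c_ge _).
  have e2 : index (sp p) (Pre J) = p by rewrite e1 index_uniq ?size_Pre // uniq_Pre.
  rewrite /sp' -[RHS]e2 [in RHS]/J Er.
  by have := index_cat (sp p) (Pre (sp p).+1) r; rewrite mem1 => <-.
have mq : q \in Pre q.+1 by rewrite mem_Pre; apply: leq_trans (c_ge _).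
have ic : (sp' q < c q.+1)%N by rewrite -size_Pre index_mem.
by rewrite (@spE _ _ ic) nth_index.
Qed.

Lemma map_sp J n : (n <= c J)%N -> map sp (iota 0 n) = take n (Pre J).
Proof.
move=> nc; apply: (@eq_from_nth _ 0%N).
  by rewrite size_map size_iota size_take size_Pre; case: ltngtP nc.
move=> i; rewrite size_map size_iota => ilt.
rewrite (nth_map 0%N) ?size_iota // nth_iota // add0n nth_take //.
by apply: spE; apply: leq_trans nc.
Qed.

Lemma sum_sp (R : realType) (X : normedModType R) (y : nat -> X) J :
  \sum_(c J <= k < c J + size (seq.filter (Q J) (blk J))) y (sp k) =
  \sum_(c J <= i < c J.+1 | Q J i) y i.
Proof.
set F := seq.filter (Q J) (blk J).
have sF : (c J + size F <= c J.+1)%N.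
  rewrite -leq_subRL; last exact: ltnW.
  by rewrite /F size_filter /blk /index_iota (leq_trans (count_size _ _)) // size_iota.
have S0 : forall n JJ, (n <= c JJ)%N ->
    \sum_(0 <= k < n) y (sp k) = \sum_(i <- take n (Pre JJ)) y i.
  by move=> n JJ nc; rewrite /index_iota subn0 -(@map_sp _ _ nc) big_map.
have E1 := S0 (c J) J (leqnn _).
rewrite take_oversize ?size_Pre // in E1.
have E2 := S0 _ J.+1 sF.
rewrite /= take_cat size_Pre ltnNge leq_addr /= addKn /Lb take_size_cat // in E2.
rewrite (big_cat_nat (leq0n (c J)) (leq_addr _ _)) /= E1 big_cat /= in E2.
rewrite big_filter in E2.
exact: (addrI _ E2).
Qed.

End Perm.

Lemma near2_intro (P : nat -> nat -> Prop) N :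
  (forall m k, (N <= m)%N -> (N <= k)%N -> P m k) ->
  \forall n \near (\oo, \oo), P n.1 n.2.
Proof.
move=> H. exists ([set n | (N <= n)%N], [set n | (N <= n)%N]) => /=.
  by split; exists N.
by move=> [m k] [/= ? ?]; apply: H.
Qed.

Lemma near2_elim (P : nat -> nat -> Prop) :
  (\forall n \near (\oo, \oo), P n.1 n.2) ->
  exists N, forall m k, (N <= m)%N -> (N <= k)%N -> P m k.
Proof.
move=> [[A B] /= [[N1 _ HA] [N2 _ HB]] H].
exists (maxn N1 N2) => m k Hm Hk; apply: (H (m, k)); split => /=.
  by apply: HA; rewrite /= (leq_trans (leq_maxl _ _) Hm).
by apply: HB; rewrite /= (leq_trans (leq_maxr _ _) Hk).
Qed.

Lemma alg_id (R : ringType) (V : lmodType R) (u v w : V) (c : R) :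
  u + (c *: v + w) = (1 - c) *: (u + w) + c *: (u + v + w).
Proof.
rewrite scalerBl scale1r !scalerDr.
rewrite -!addrA; congr (_ + _).
by rewrite [c *: u + (_ + _)]addrCA [LHS]addrC; congr (_ + _); rewrite addrC addrK.
Qed.

Section S.
Variables (R : realType) (X : completeNormedModType R).

Lemma conv_bound (y : nat -> X) (t : nat -> R) (eps : R) (s : seq nat) :
  (forall i, 0 <= t i <= 1) -> forall z,
  (forall m : bitseq, `|z + \sum_(i <- mask m s) y i| <= eps) ->
  `|z + \sum_(i <- s) t i *: y i| <= eps.
Proof.
move=> t01; elim: s => [|a s IH] z H.
  by have := H [::]; rewrite /= !big_nil.
have H0 : `|z + \sum_(i <- s) t i *: y i| <= eps.
  by apply: IH => m; have := H (false :: m).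
have H1 : `|(z + y a) + \sum_(i <- s) t i *: y i| <= eps.
  apply: IH => m; have := H (true :: m); by rewrite /= big_cons addrA.
have /andP[ta0 ta1] := t01 a.
have -> : z + \sum_(i <- a :: s) t i *: y i =
   (1 - t a) *: (z + \sum_(i <- s) t i *: y i) + t a *: ((z + y a) + \sum_(i <- s) t i *: y i).
  by rewrite big_cons alg_id.
apply: le_trans (ler_normD _ _) _.
rewrite !normrZ (ger0_norm ta0) ger0_norm ?subr_ge0 //.
apply: le_trans (lerD (ler_wpM2l _ H0) (ler_wpM2l ta0 H1)) _; first by rewrite subr_ge0.
by rewrite -mulrDl subrK mul1r.
Qed.

Lemma part2 (e : nat -> X) (estar : nat -> X -> R) (eps : nat -> R) :
  normalized e -> (forall n, 0 <= eps n) ->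
  cvg (series eps @ \oo) -> solid_brick e estar eps.
Proof.
move=> ne eps0 ceps x bx a ha.
apply: normed_cvg.
apply: (series_le_cvg _ _ _ ceps) => // n.
  by rewrite /=.
by rewrite /= normrZ ne mulr1 (le_trans (ha n) (bx n)).
Qed.
End S.

Lemma permL (R : realType) (X : completeNormedModType R) (y : nat -> X) :
  (forall s, bijective s -> cvg (series (fun n => y (s n)) @ \oo)) ->
  forall eps : R, 0 < eps -> exists N, forall m k (P : pred nat), (N <= m)%N ->
    `|\sum_(m <= i < k | P i) y i| <= eps.
Proof.
move=> H eps e0.
case: (pselect (exists N, forall m k (P : pred nat), (N <= m)%N ->
    `|\sum_(m <= i < k | P i) y i| <= eps)) => // nH; exfalso.
have H1 : forall N, exists mkP : nat * nat * pred nat, (N <= mkP.1.1)%N /\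
    eps < `|\sum_(mkP.1.1 <= i < mkP.1.2 | mkP.2 i) y i|.
  move=> N; apply: contrapT => H2; apply: nH; exists N => m k P mN.
  rewrite leNgt; apply/negP => lt; apply: H2; by exists (m, k, P).
have [g Hg] := choice H1.
pose c := fix c j := if j is j'.+1 then maxn (g (c j')).1.2 (c j').+1 else 0%N.
pose Q := fun j i => ((g (c j)).2 i && ((g (c j)).1.1 <= i)%N) && (i < (g (c j)).1.2)%N.
have c0 : c 0%N = 0%N by [].
have cS : forall j, (c j < c j.+1)%N by move=> j; rewrite /= leq_maxr.
have blk_sum : forall j, eps < `|\sum_(c j <= i < c j.+1 | Q j i) y i|.
  move=> j; have [Hm Hlt] := Hg (c j).
  have Hk : ((g (c j)).1.2 <= c j.+1)%N by rewrite /= leq_maxl.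
  rewrite (big_nat_widenl _ _ _ _ _ Hm) (big_nat_widen _ _ _ _ _ Hk) in Hlt.
  exact: Hlt.
have bij := @sp_bij c Q c0 cS.
have /cvg_cauchy := H _ bij.
move=> /cauchy_seriesP /(_ eps e0) HC.
have [N HN] := @near2_elim (fun m k => `|\sum_(m <= k0 < k) y (sp c Q k0)| < eps) HC.
have cN : (N <= c N)%N by apply: c_ge.
have := HN (c N) (c N + size (seq.filter (Q N) (blk c N)))%N cN (leq_trans cN (leq_addr _ _)).
rewrite sum_sp //.
by move=> /(lt_trans (blk_sum N)); rewrite ltxx.
Qed.

Lemma part1 (R : realType) (X : completeNormedModType R)
  (e : nat -> X) (estar : nat -> X -> R) (eps : nat -> R) :
  unconditional_basis e estar -> solid_brick e estar eps.
Proof.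
move=> U x bx a ha.
pose y := fun n => estar n x *: e n.
have HL := @permL R X y (fun s bs => U x s bs).
pose t n := if estar n x == 0 then 0 else a n / estar n x.
have aE : forall n, a n *: e n = t n *: y n.
  move=> n; rewrite /t /y; case: eqP => [E|/eqP E].
    have := ha n; rewrite E normr0 normr_le0 => /eqP ->.
    by rewrite !scale0r.
  by rewrite scalerA divfK.
have t1 : forall n, `|t n| <= 1.
  move=> n; rewrite /t; case: eqP => [_|/eqP E]; first by rewrite normr0.
  by rewrite normrM normfV ler_pdivrMr ?normr_gt0 // mul1r.
pose tp n := Num.max (t n) 0.
pose tn n := Num.max (- t n) 0.
have tpn : forall n, t n = tp n - tn n.
  move=> n; rewrite /tp /tn; have [h|h] := leP 0 (t n).
    have h' : - t n <= 0 by rewrite oppr_le0.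
    by rewrite (max_idPr h') subr0.
  have h1 : t n <= 0 := ltW h.
  have h2 : 0 <= - t n by rewrite oppr_ge0.
  by rewrite (max_idPl h2) sub0r opprK.
have tp01 : forall n, 0 <= tp n <= 1.
  move=> n; rewrite /tp le_max lexx orbT /= ge_max ler01 andbT.
  by apply: le_trans (ler_norm _) (t1 n).
have tn01 : forall n, 0 <= tn n <= 1.
  move=> n; rewrite /tn le_max lexx orbT /= ge_max ler01 andbT.
  by apply: le_trans (t1 n); rewrite -normrN ler_norm.
apply/cauchy_cvgP/cauchy_seriesP => eps0 e0.
have e3 : 0 < eps0 / 3 by rewrite divr_gt0.
have [N HN] := HL _ e3.
apply: (@near2_intro (fun m k => `|\sum_(m <= i < k) a i *: e i| < eps0) N).
move=> m k Nm Nk.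
have B : forall u : nat -> R, (forall i, 0 <= u i <= 1) ->
    `|\sum_(m <= i < k) u i *: y i| <= eps0 / 3.
  move=> u u01; rewrite -[X in `|X|]add0r; apply: conv_bound => // msk.
  by rewrite add0r mask_filter ?iota_uniq // big_filter; apply: HN.
have -> : \sum_(m <= i < k) a i *: e i =
    \sum_(m <= i < k) tp i *: y i - \sum_(m <= i < k) tn i *: y i.
  by rewrite -sumrB; apply: eq_bigr => i _; rewrite aE tpn scalerBl.
apply: le_lt_trans (ler_normB _ _) _.
apply: le_lt_trans (lerD (B _ tp01) (B _ tn01)) _.
lra.
Qed.


Theorem proposition2p5 (R : realType) (X : completeNormedModType R)
  (e : nat -> X) (estar : nat -> X -> R) (eps : nat -> R) :
  schauder_basis e -> normalized e -> biorthogonal_functionals e estar ->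
  (forall n, 0 <= eps n) ->
  (unconditional_basis e estar -> solid_brick e estar eps) /\
  (cvg (series eps @ \oo) -> solid_brick e estar eps).
Proof.
move=> _ ne _ eps0; split; first exact: part1.
exact: part2.
Qed.
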